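(* Let $K=(\mathbf{k}_1,\dots,\mathbf{k}_6)\in(\mathbb{R}^2)^6$ be a 3-RPR configuration whose base anchor points $\mathbf{k}_1,\mathbf{k}_2,\mathbf{k}_3\in\mathbb{R}^2$ are fixed and whose platform anchor points are $\mathbf{k}_j=\mathbf{R}\mathbf{p}_j+\mathbf{t}$ ($j=4,5,6$) for fixed $\mathbf{p}_4,\mathbf{p}_5,\mathbf{p}_6\in\mathbb{R}^2$ and a pose $(\mathbf{R},\mathbf{t})$ with $\mathbf{R}\in SO(2)$, $\mathbf{t}\in\mathbb{R}^2$. Let $D$ be either $D^{\blacktriangle}_{\vartriangle}$ or $D^{\vartriangle}_{\vartriangle}$. If $K'=(\mathbf{k}'_1,\dots,\mathbf{k}'_6)$ is a closest configuration to $K$ on the collinearity variety $C_B=0$, i.e. a global minimizer of $D(K,K')$ over all $K'\in\mathbb{R}^{12}$ with $C_B(K')=0$, then $\mathbf{k}'_1,\mathbf{k}'_2,\mathbf{k}'_3$ are the pedal points (orthogonal projections) of $\mathbf{k}_1,\mathbf{k}_2,\mathbf{k}_3$ on the line of regression of $\mathbf{k}_1,\mathbf{k}_2,\mathbf{k}_3$. Moreover, the distance $\min\{D(K,K'):C_B(K')=0\}$ depends only on the geometry of the manipulator, i.e. it is independent of the pose $(\mathbf{R},\mathbf{t})$.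
   Context: A configuration is $K'=(\mathbf{k}'_1,\dots,\mathbf{k}'_6)$ with $\mathbf{k}'_i=(c_i,d_i)^T\in\mathbb{R}^2$, viewed as a point of $\mathbb{R}^{12}$. For indices $i,j$ define the segment distance $d(\vert_{ij},\vert'_{ij})^2=\frac13\big[\|\mathbf{k}_i-\mathbf{k}'_i\|^2+\|\mathbf{k}_j-\mathbf{k}'_j\|^2+(\mathbf{k}_i-\mathbf{k}'_i)^T(\mathbf{k}_j-\mathbf{k}'_j)\big]$ and for $\{i,j,k\}$ the triangle distance $d(\blacktriangle_{ijk},\blacktriangle'_{ijk})^2=\frac16\big[\sum_{x=i,j,k}\|\mathbf{k}_x-\mathbf{k}'_x\|^2+(\mathbf{k}_i-\mathbf{k}'_i)^T(\mathbf{k}_k-\mathbf{k}'_k)+(\mathbf{k}_i-\mathbf{k}'_i)^T(\mathbf{k}_j-\mathbf{k}'_j)+(\mathbf{k}_k-\mathbf{k}'_k)^T(\mathbf{k}_j-\mathbf{k}'_j)\big]$. Then $D^{\blacktriangle}_{\vartriangle}(K,K')^2=\frac17\big[\sum_{(i,j)\in I_3}d(\vert_{ij},\vert'_{ij})^2+d(\blacktriangle_{456},\blacktriangle'_{456})^2\big]$ with $I_3=\{(1,4),(2,5),(3,6),(1,2),(2,3),(1,3)\}$, and $D^{\vartriangle}_{\vartriangle}(K,K')^2=\frac19\sum_{(i,j)\in I_4}d(\vert_{ij},\vert'_{ij})^2$ with $I_4=\{(1,2),(2,3),(1,3),(1,4),(2,5),(3,6),(4,5),(5,6),(4,6)\}$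 (distances are the nonnegative square roots). The collinearity polynomial of the base is $C_B(K')=\det\begin{pmatrix}1&1&1\\ c_1&c_2&c_3\\ d_1&d_2&d_3\end{pmatrix}$. The line of regression of three points is the line minimizing the sum of squared orthogonal distances to these points; the pedal point of a point on a line is its orthogonal projection onto that line. *)

(* Defs.v *)
From Stdlib Require Import Reals Lra.
Open Scope R_scope.

Definition point : Type := (R * R)%type.

Definition padd (p q : point) : point := (fst p + fst q, snd p + snd q).
Definition psub (p q : point) : point := (fst p - fst q, snd p - snd q).
Definition dot (p q : point) : R := fst p * fst q + snd p * snd q.
Definition nrm2 (p : point) : R := dot p p.

Record config : Type := mkConfig { k1 : point; k2 : point; k3 : point;
                                   k4 : point; k5 : point; k6 : point }.

Definition kpt (K : config) (i : nat) : point :=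
  match i with
  | 1%nat => k1 K | 2%nat => k2 K | 3%nat => k3 K
  | 4%nat => k4 K | 5%nat => k5 K | _ => k6 K
  end.

Definition dv (K K' : config) (i : nat) : point := psub (kpt K i) (kpt K' i).

Definition dseg (K K' : config) (i j : nat) : R :=
  sqrt ((1/3) * (nrm2 (dv K K' i) + nrm2 (dv K K' j) + dot (dv K K' i) (dv K K' j))).

Definition dtri (K K' : config) (i j k : nat) : R :=
  sqrt ((1/6) * (nrm2 (dv K K' i) + nrm2 (dv K K' j) + nrm2 (dv K K' k)
                 + dot (dv K K' i) (dv K K' k) + dot (dv K K' i) (dv K K' j)
                 + dot (dv K K' k) (dv K K' j))).

Definition D_tri_seg (K K' : config) : R :=
  sqrt ((1/7) * ( (dseg K K' 1 4)^2 + (dseg K K' 2 5)^2 + (dseg K K' 3 6)^2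
                + (dseg K K' 1 2)^2 + (dseg K K' 2 3)^2 + (dseg K K' 1 3)^2
                + (dtri K K' 4 5 6)^2 )).

Definition D_seg_seg (K K' : config) : R :=
  sqrt ((1/9) * ( (dseg K K' 1 2)^2 + (dseg K K' 2 3)^2 + (dseg K K' 1 3)^2
                + (dseg K K' 1 4)^2 + (dseg K K' 2 5)^2 + (dseg K K' 3 6)^2
                + (dseg K K' 4 5)^2 + (dseg K K' 5 6)^2 + (dseg K K' 4 6)^2 )).

Inductive dist_kind : Type := TriSeg | SegSeg.

Definition Dist (d : dist_kind) : config -> config -> R :=
  match d with TriSeg => D_tri_seg | SegSeg => D_seg_seg end.

(* collinearity polynomial of the base: det [[1,1,1],[c1,c2,c3],[d1,d2,d3]] *)
Definition C_B (K : config) : R :=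
  let '(c1, d1) := k1 K in let '(c2, d2) := k2 K in let '(c3, d3) := k3 K in
  (c2 * d3 - c3 * d2) - (c1 * d3 - c3 * d1) + (c1 * d2 - c2 * d1).

Definition is_closest (d : dist_kind) (K K' : config) : Prop :=
  C_B K' = 0 /\ forall K'' : config, C_B K'' = 0 -> Dist d K K' <= Dist d K K''.

(* Lines in R^2: { x | dot n x = c } with normal n <> 0. *)
Definition line_dist2 (n : point) (c : R) (p : point) : R :=
  (dot n p - c) ^ 2 / nrm2 n.

Definition pedal (n : point) (c : R) (p : point) : point :=
  let t := (dot n p - c) / nrm2 n in (fst p - t * fst n, snd p - t * snd n).

Definition is_regression_line (a1 a2 a3 : point) (n : point) (c : R) : Prop :=
  n <> (0, 0) /\
  forall (n' : point) (c' : R), n' <> (0, 0) ->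
    line_dist2 n c a1 + line_dist2 n c a2 + line_dist2 n c a3
    <= line_dist2 n' c' a1 + line_dist2 n' c' a2 + line_dist2 n' c' a3.

(* Rotation in SO(2) given by (cs, sn) with cs^2 + sn^2 = 1:
   matrix [[cs, -sn], [sn, cs]]. *)
Definition rot (cs sn : R) (p : point) : point :=
  (cs * fst p - sn * snd p, sn * fst p + cs * snd p).

Definition rpr_config (b1 b2 b3 p4 p5 p6 : point) (cs sn : R) (t : point)
  : config :=
  mkConfig b1 b2 b3 (padd (rot cs sn p4) t) (padd (rot cs sn p5) t)
           (padd (rot cs sn p6) t).

(* Main.v *)
Require Import Defs.
From Stdlib Require Import Reals Lra Psatz.
Open Scope R_scope.

Definition seg2 (a b : point) : R := (1/3) * (nrm2 a + nrm2 b + dot a b).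
Definition tri2 (a b c : point) : R :=
  (1/6) * (nrm2 a + nrm2 b + nrm2 c + dot a c + dot a b + dot c b).

Lemma seg2_nonneg a b : 0 <= seg2 a b.
Proof. destruct a as [a1 a2], b as [b1 b2]; unfold seg2, nrm2, dot; simpl.
  pose proof (Rle_0_sqr (a1+b1)); pose proof (Rle_0_sqr (a2+b2)); pose proof (Rle_0_sqr a1); pose proof (Rle_0_sqr a2); pose proof (Rle_0_sqr b1); pose proof (Rle_0_sqr b2); unfold Rsqr in *; nra. Qed.
Lemma tri2_nonneg a b c : 0 <= tri2 a b c.
Proof. destruct a as [a1 a2], b as [b1 b2], c as [c1 c2]; unfold tri2, nrm2, dot; simpl.
  pose proof (Rle_0_sqr (a1+b1+c1)); pose proof (Rle_0_sqr (a2+b2+c2)); pose proof (Rle_0_sqr a1); pose proof (Rle_0_sqr a2); pose proof (Rle_0_sqr b1); pose proof (Rle_0_sqr b2); pose proof (Rle_0_sqr c1); pose proof (Rle_0_sqr c2); unfold Rsqr in *; nra. Qed.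

Definition FF (d : dist_kind) (e1 e2 e3 e4 e5 e6 : point) : R :=
  match d with
  | TriSeg => (1/7) * (seg2 e1 e4 + seg2 e2 e5 + seg2 e3 e6 + seg2 e1 e2
                       + seg2 e2 e3 + seg2 e1 e3 + tri2 e4 e5 e6)
  | SegSeg => (1/9) * (seg2 e1 e2 + seg2 e2 e3 + seg2 e1 e3 + seg2 e1 e4
                       + seg2 e2 e5 + seg2 e3 e6 + seg2 e4 e5 + seg2 e5 e6 + seg2 e4 e6)
  end.

Lemma FF_nonneg d e1 e2 e3 e4 e5 e6 : 0 <= FF d e1 e2 e3 e4 e5 e6.
Proof.
  destruct d; unfold FF; apply Rmult_le_pos; try lra;
  repeat apply Rplus_le_le_0_compat; auto using seg2_nonneg, tri2_nonneg.
Qed.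

Lemma dseg_sq K K' i j : (dseg K K' i j)^2 = seg2 (dv K K' i) (dv K K' j).
Proof. unfold dseg. rewrite pow2_sqrt; [reflexivity | apply seg2_nonneg]. Qed.
Lemma dtri_sq K K' i j k : (dtri K K' i j k)^2 = tri2 (dv K K' i) (dv K K' j) (dv K K' k).
Proof. unfold dtri. rewrite pow2_sqrt; [reflexivity | apply tri2_nonneg]. Qed.

Lemma Dist_FF d K K' : Dist d K K' =
  sqrt (FF d (dv K K' 1) (dv K K' 2) (dv K K' 3) (dv K K' 4) (dv K K' 5) (dv K K' 6)).
Proof.
  destruct d; unfold Dist, D_tri_seg, D_seg_seg, FF; rewrite ?dseg_sq, ?dtri_sq; reflexivity.
Qed.

Definition sc (k : R) (p : point) : point := (k * fst p, k * snd p).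
Definition alpha d := match d with TriSeg => 23/210 | SegSeg => 4/45 end.
Definition beta d := match d with TriSeg => 1/40 | SegSeg => 41/2160 end.
Definition o1 d := match d with TriSeg => -7/20 | SegSeg => -7/40 end.
Definition o2 d := match d with TriSeg => 1/20 | SegSeg => 1/40 end.
Definition opt d (a b c : point) : point := padd (sc (o1 d) a) (sc (o2 d) (padd b c)).
Definition zero : point := (0, 0).

Lemma FF_decomp d e1 e2 e3 e4 e5 e6 :
  FF d e1 e2 e3 e4 e5 e6 = alpha d * (nrm2 e1 + nrm2 e2 + nrm2 e3)
   + beta d * nrm2 (padd e1 (padd e2 e3))
   + FF d zero zero zero (psub e4 (opt d e1 e2 e3)) (psub e5 (opt d e2 e1 e3))
        (psub e6 (opt d e3 e1 e2)).
Proof.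
  destruct e1, e2, e3, e4, e5, e6;
  destruct d; unfold FF, seg2, tri2, nrm2, dot, opt, sc, padd, psub, zero, alpha, beta, o1, o2;
  simpl; field.
Qed.

Lemma FF_zero d : FF d zero zero zero zero zero zero = 0.
Proof. destruct d; unfold FF, seg2, tri2, nrm2, dot, zero; simpl; field. Qed.

Definition gx (a1 a2 a3 : point) := (fst a1 + fst a2 + fst a3) / 3.
Definition gy (a1 a2 a3 : point) := (snd a1 + snd a2 + snd a3) / 3.
Definition Sxx a1 a2 a3 := let g := gx a1 a2 a3 in
  (fst a1 - g)^2 + (fst a2 - g)^2 + (fst a3 - g)^2.
Definition Syy a1 a2 a3 := let g := gy a1 a2 a3 in
  (snd a1 - g)^2 + (snd a2 - g)^2 + (snd a3 - g)^2.
Definition Sxy a1 a2 a3 := let g := gx a1 a2 a3 in let h := gy a1 a2 a3 in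
  (fst a1 - g)*(snd a1 - h) + (fst a2 - g)*(snd a2 - h) + (fst a3 - g)*(snd a3 - h).
Definition lam a1 a2 a3 :=
  (Sxx a1 a2 a3 + Syy a1 a2 a3
   - sqrt ((Sxx a1 a2 a3 - Syy a1 a2 a3)^2 + 4 * Sxy a1 a2 a3 ^ 2)) / 2.

Lemma psd2 p q s u v : 0 <= p -> 0 <= q -> p*q = s^2 -> 0 <= p*u^2 + 2*s*u*v + q*v^2.
Proof.
  intros Hp Hq Hs. destruct (Req_dec p 0) as [H0|H0].
  - subst. assert (s = 0) by nra. subst. nra.
  - assert (Pp: 0 < p) by lra.
    assert (H: p*(p*u^2 + 2*s*u*v + q*v^2) = (p*u+s*v)^2 + (p*q - s^2)*v^2) by ring.
    rewrite Hs in H. replace (s^2 - s^2) with 0 in H by ring.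
    assert (0 <= p*(p*u^2 + 2*s*u*v + q*v^2)) by (rewrite H; pose proof (pow2_ge_0 (p*u+s*v)); lra).
    nra.
Qed.

Lemma ker2 p q s : p*q = s^2 -> exists u v, (u <> 0 \/ v <> 0) /\ p*u + s*v = 0 /\ s*u + q*v = 0.
Proof.
  intros Hs. destruct (Req_dec p 0) as [H0|H0].
  - subst. assert (s = 0) by nra. subst. exists 1, 0. split; [left; lra | split; ring].
  - exists s, (-p). split; [right; lra | split; nra].
Qed.

Lemma lam_aux X Y Z r : 0 <= r -> r*r = (X-Y)^2 + 4*Z^2 ->
  let l := (X+Y-r)/2 in 0 <= X - l /\ 0 <= Y - l /\ (X - l)*(Y - l) = Z^2.
Proof.
  intros Hr Hrr l. unfold l.
  assert (r*r >= (X-Y)*(X-Y)) by nra.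
  assert (X - Y + r >= 0) by nra.
  assert (Y - X + r >= 0) by nra.
  split; [lra | split; [lra | nra]].
Qed.

Lemma lam_props a1 a2 a3 :
  0 <= Sxx a1 a2 a3 - lam a1 a2 a3 /\ 0 <= Syy a1 a2 a3 - lam a1 a2 a3 /\
  (Sxx a1 a2 a3 - lam a1 a2 a3) * (Syy a1 a2 a3 - lam a1 a2 a3) = Sxy a1 a2 a3 ^ 2.
Proof.
  unfold lam. apply lam_aux. apply sqrt_pos. apply sqrt_sqrt. pose proof (pow2_ge_0 (Sxx a1 a2 a3 - Syy a1 a2 a3)); pose proof (pow2_ge_0 (Sxy a1 a2 a3)); lra.
Qed.

Lemma quad_ge a1 a2 a3 u v :
  lam a1 a2 a3 * (u^2 + v^2) <= u^2 * Sxx a1 a2 a3 + 2*u*v*Sxy a1 a2 a3 + v^2 * Syy a1 a2 a3.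
Proof.
  destruct (lam_props a1 a2 a3) as [H1 [H2 H3]].
  pose proof (psd2 _ _ _ u v H1 H2 H3). nra.
Qed.

Lemma sum_sq_decomp a1 a2 a3 u v c :
  (u*fst a1 + v*snd a1 - c)^2 + (u*fst a2 + v*snd a2 - c)^2 + (u*fst a3 + v*snd a3 - c)^2
  = (u^2 * Sxx a1 a2 a3 + 2*u*v*Sxy a1 a2 a3 + v^2 * Syy a1 a2 a3)
    + 3*(u*gx a1 a2 a3 + v*gy a1 a2 a3 - c)^2.
Proof.
  destruct a1, a2, a3; unfold Sxx, Syy, Sxy, gx, gy; simpl; field.
Qed.

Lemma nz_pos (n : point) : n <> (0,0) -> 0 < nrm2 n.
Proof.
  destruct n as [u v]; unfold nrm2, dot; simpl; intro H.
  destruct (Req_dec u 0); destruct (Req_dec v 0); subst; try (exfalso; apply H; reflexivity); nra.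
Qed.

Lemma reg_lower a1 a2 a3 n c : n <> (0,0) ->
  lam a1 a2 a3 <= line_dist2 n c a1 + line_dist2 n c a2 + line_dist2 n c a3.
Proof.
  intro Hn. pose proof (nz_pos n Hn) as N. destruct n as [u v].
  unfold line_dist2 in *. unfold nrm2, dot in *; cbn [fst snd] in *.
  unfold Rdiv. rewrite <- !Rmult_plus_distr_r.
  apply Rmult_le_reg_r with (u*u+v*v); [lra|].
  rewrite Rmult_assoc, Rinv_l, Rmult_1_r by lra.
  rewrite sum_sq_decomp. pose proof (quad_ge a1 a2 a3 u v).
  pose proof (pow2_ge_0 (u * gx a1 a2 a3 + v * gy a1 a2 a3 - c)). nra.
Qed.

Lemma pt_dist a p n c : dot n p = c -> n <> (0,0) -> line_dist2 n c a <= nrm2 (psub a p).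
Proof.
  intros Hp Hn. pose proof (nz_pos n Hn) as N. destruct n as [u v], a as [x y], p as [px py].
  unfold line_dist2, nrm2, psub, dot in *; simpl in *.
  unfold Rdiv. apply Rmult_le_reg_r with (u*u+v*v); [lra|].
  rewrite Rmult_assoc, Rinv_l, Rmult_1_r by lra.
  subst c.
  assert (E: (u*x+v*y - (u*px+v*py))^2 + ((x-px)*v - (y-py)*u)^2
             = ((x-px)*(x-px) + (y-py)*(y-py))*(u*u+v*v)) by ring.
  pose proof (pow2_ge_0 ((x-px)*v - (y-py)*u)). nra.
Qed.

Lemma pt_eq a p n c : dot n p = c -> n <> (0,0) ->
  line_dist2 n c a = nrm2 (psub a p) -> p = pedal n c a.
Proof.
  intros Hp Hn Heq. pose proof (nz_pos n Hn) as N. destruct n as [u v], a as [x y], p as [px py].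
  unfold line_dist2, pedal, nrm2, psub, dot in *; cbn [fst snd] in *.
  subst c.
  assert (E: (u*x+v*y - (u*px+v*py))^2 + ((x-px)*v - (y-py)*u)^2
             = ((x-px)*(x-px) + (y-py)*(y-py))*(u*u+v*v)) by ring.
  assert (E2: (u*x+v*y - (u*px+v*py))^2 = ((x-px)*(x-px) + (y-py)*(y-py))*(u*u+v*v)).
  { rewrite <- Heq. field. lra. }
  assert (T2: ((x-px)*v - (y-py)*u)^2 = 0) by lra.
  assert (W: (x-px)*v - (y-py)*u = 0) by (apply Rsqr_eq_0; unfold Rsqr; rewrite <- T2; ring).
  set (t := u*x+v*y - (u*px+v*py)).
  assert (A1: (x-px)*(u*u+v*v) = t*u).
  { assert (H: (x-px)*(u*u+v*v) - t*u = v*((x-px)*v - (y-py)*u)) by (unfold t; ring).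
    rewrite W in H. lra. }
  assert (A2: (y-py)*(u*u+v*v) = t*v).
  { assert (H: (y-py)*(u*u+v*v) - t*v = -u*((x-px)*v - (y-py)*u)) by (unfold t; ring).
    rewrite W in H. lra. }
  f_equal.
  - replace (t/(u*u+v*v)*u) with ((t*u)/(u*u+v*v)) by (field; lra).
    rewrite <- A1. field. lra.
  - replace (t/(u*u+v*v)*v) with ((t*v)/(u*u+v*v)) by (field; lra).
    rewrite <- A2. field. lra.
Qed.

Lemma nrm2_nonneg p : 0 <= nrm2 p.
Proof. destruct p as [x y]; unfold nrm2, dot; simpl; nra. Qed.

Lemma line_through K : C_B K = 0 -> exists n c, n <> (0,0) /\
  dot n (k1 K) = c /\ dot n (k2 K) = c /\ dot n (k3 K) = c.
Proof.
  destruct K as [[x1 y1] [x2 y2] [x3 y3] ? ? ?]; unfold C_B, dot; simpl. intro H.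
  assert (G12: (x1 <> x2 \/ y1 <> y2) -> exists n c, n <> (0,0) /\
     fst n * x1 + snd n * y1 = c /\ fst n * x2 + snd n * y2 = c /\ fst n * x3 + snd n * y3 = c).
  { intro Hd. exists (y2 - y1, x1 - x2), ((y2-y1)*x1 + (x1-x2)*y1). simpl.
    split; [intro E; injection E; intros; destruct Hd; lra|].
    split; [ring|]. split; [ring| nra]. }
  destruct (Req_dec x1 x2) as [Ex|Ex]; [|apply G12; left; exact Ex].
  destruct (Req_dec y1 y2) as [Ey|Ey]; [|apply G12; right; exact Ey].
  subst x2 y2.
  destruct (Req_dec x1 x3) as [Ex3|Ex3]; [destruct (Req_dec y1 y3) as [Ey3|Ey3]|].
  - subst x3 y3. exists (1,0), x1. simpl. split; [intro E; injection E; lra|]. repeat split; ring.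
  - exists (y3 - y1, x1 - x3), ((y3-y1)*x1 + (x1-x3)*y1). simpl.
    split; [intro E; injection E; intros; lra|]. repeat split; ring.
  - exists (y3 - y1, x1 - x3), ((y3-y1)*x1 + (x1-x3)*y1). simpl.
    split; [intro E; injection E; intros; lra|]. repeat split; ring.
Qed.

Lemma collinear_CB K n c : n <> (0,0) ->
  dot n (k1 K) = c -> dot n (k2 K) = c -> dot n (k3 K) = c -> C_B K = 0.
Proof.
  intros Hn. pose proof (nz_pos n Hn) as N.
  destruct n as [u v]; destruct K as [[x1 y1] [x2 y2] [x3 y3] ? ? ?]; unfold C_B, nrm2, dot in *; simpl in *.
  intros H1 H2 H3.
  set (C := x2 * y3 - x3 * y2 - (x1 * y3 - x3 * y1) + (x1 * y2 - x2 * y1)).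
  assert (A: u*(x2-x1) + v*(y2-y1) = 0) by nra.
  assert (B: u*(x3-x1) + v*(y3-y1) = 0) by nra.
  assert (HC: C*(u*u+v*v) = u*((u*(x2-x1) + v*(y2-y1))*(y3-y1) - (u*(x3-x1) + v*(y3-y1))*(y2-y1))
                          - v*((u*(x2-x1) + v*(y2-y1))*(x3-x1) - (u*(x3-x1) + v*(y3-y1))*(x2-x1)))
    by (unfold C; ring).
  rewrite A, B in HC.
  assert (C*(u*u+v*v) = 0) by (rewrite HC; ring).
  destruct (Rmult_integral _ _ H) as [H0|H0]; [exact H0| unfold dot in N; simpl in N; nra].
Qed.

Lemma pedal_on_line n c a : n <> (0,0) -> dot n (pedal n c a) = c.
Proof.
  intro Hn. pose proof (nz_pos n Hn) as N. destruct n as [u v], a as [x y].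
  unfold pedal, nrm2, dot in *; simpl in *. field. lra.
Qed.

Lemma psub_psub a o : psub (psub a (psub a o)) o = zero.
Proof. destruct a, o; unfold psub, zero; simpl; f_equal; ring. Qed.

Lemma pedal_facts a1 a2 a3 u v : (u,v) <> (0,0) ->
  let c := u * gx a1 a2 a3 + v * gy a1 a2 a3 in
  (nrm2 (psub a1 (pedal (u,v) c a1)) + nrm2 (psub a2 (pedal (u,v) c a2))
   + nrm2 (psub a3 (pedal (u,v) c a3))) * (u*u+v*v)
  = (u*fst a1 + v*snd a1 - c)^2 + (u*fst a2 + v*snd a2 - c)^2 + (u*fst a3 + v*snd a3 - c)^2
  /\ padd (psub a1 (pedal (u,v) c a1)) (padd (psub a2 (pedal (u,v) c a2))
        (psub a3 (pedal (u,v) c a3))) = zero.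
Proof.
  intros Hn c. pose proof (nz_pos _ Hn) as N. unfold nrm2, dot in N; simpl in N.
  unfold c; destruct a1, a2, a3; unfold pedal, nrm2, dot, psub, padd, zero, gx, gy; simpl.
  split; [field; lra| f_equal; field; lra].
Qed.

Lemma alpha_pos d : 0 < alpha d.
Proof. destruct d; simpl; lra. Qed.
Lemma beta_nonneg d : 0 <= beta d.
Proof. destruct d; simpl; lra. Qed.

Definition FFK d K K' := FF d (dv K K' 1) (dv K K' 2) (dv K K' 3) (dv K K' 4) (dv K K' 5) (dv K K' 6).
Definition LK K := lam (k1 K) (k2 K) (k3 K).

Lemma base_lower K K' : C_B K' = 0 ->
  LK K <= nrm2 (dv K K' 1) + nrm2 (dv K K' 2) + nrm2 (dv K K' 3).
Proof.
  intro H. destruct (line_through K' H) as [n [c [Hn [H1 [H2 H3]]]]].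
  pose proof (reg_lower (k1 K) (k2 K) (k3 K) n c Hn).
  pose proof (pt_dist (k1 K) (k1 K') n c H1 Hn).
  pose proof (pt_dist (k2 K) (k2 K') n c H2 Hn).
  pose proof (pt_dist (k3 K) (k3 K') n c H3 Hn).
  unfold LK. change (dv K K' 1) with (psub (k1 K) (k1 K')).
  change (dv K K' 2) with (psub (k2 K) (k2 K')).
  change (dv K K' 3) with (psub (k3 K) (k3 K')). lra.
Qed.

Lemma FF_lower d K K' : C_B K' = 0 -> alpha d * LK K <= FFK d K K'.
Proof.
  intro H. pose proof (base_lower K K' H). unfold FFK. rewrite FF_decomp.
  pose proof (alpha_pos d). pose proof (beta_nonneg d).
  match goal with |- context [beta d * nrm2 ?p] => pose proof (nrm2_nonneg p) end.
  match goal with |- context [FF d zero zero zero ?a ?b ?c] => pose proof (FF_nonneg d zero zero zero a b c) end.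
  assert (alpha d * LK K <= alpha d * (nrm2 (dv K K' 1) + nrm2 (dv K K' 2) + nrm2 (dv K K' 3)))
    by (apply Rmult_le_compat_l; lra).
  assert (0 <= beta d * nrm2 (padd (dv K K' 1) (padd (dv K K' 2) (dv K K' 3))))
    by (apply Rmult_le_pos; lra).
  lra.
Qed.

Lemma attain d K : exists K0, C_B K0 = 0 /\ FFK d K K0 = alpha d * LK K.
Proof.
  set (a1 := k1 K); set (a2 := k2 K); set (a3 := k3 K).
  destruct (lam_props a1 a2 a3) as [Hp [Hq Hs]].
  destruct (ker2 _ _ _ Hs) as [u [v [Hnz [E1 E2]]]].
  assert (Hn: (u,v) <> (0,0)) by (intro E; injection E; intros; destruct Hnz; lra).
  set (c := u * gx a1 a2 a3 + v * gy a1 a2 a3).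
  set (q1 := pedal (u,v) c a1); set (q2 := pedal (u,v) c a2); set (q3 := pedal (u,v) c a3).
  set (e1 := psub a1 q1); set (e2 := psub a2 q2); set (e3 := psub a3 q3).
  exists (mkConfig q1 q2 q3 (psub (k4 K) (opt d e1 e2 e3)) (psub (k5 K) (opt d e2 e1 e3))
            (psub (k6 K) (opt d e3 e1 e2))).
  split.
  - apply collinear_CB with (u,v) c; [exact Hn| |  |]; cbn [k1 k2 k3]; unfold q1, q2, q3; apply pedal_on_line; exact Hn.
  - unfold FFK.
    change (dv K _ 1) with e1. change (dv K _ 2) with e2. change (dv K _ 3) with e3.
    change (dv K _ 4) with (psub (k4 K) (psub (k4 K) (opt d e1 e2 e3))).
    change (dv K _ 5) with (psub (k5 K) (psub (k5 K) (opt d e2 e1 e3))).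
    change (dv K _ 6) with (psub (k6 K) (psub (k6 K) (opt d e3 e1 e2))).
    rewrite FF_decomp, !psub_psub, FF_zero.
    destruct (pedal_facts a1 a2 a3 u v Hn) as [F1 F2]. fold c in F1, F2.
    fold q1 q2 q3 e1 e2 e3 in F1, F2.
    rewrite F2. replace (nrm2 zero) with 0 by (unfold nrm2, dot, zero; simpl; ring).
    rewrite sum_sq_decomp in F1.
    pose proof (nz_pos _ Hn) as N; unfold nrm2, dot in N; simpl in N.
    unfold LK; fold a1 a2 a3.
    set (X := Sxx a1 a2 a3) in *; set (Y := Syy a1 a2 a3) in *; set (Z := Sxy a1 a2 a3) in *;
    set (l := lam a1 a2 a3) in *.
    assert (Q: u^2*X + 2*u*v*Z + v^2*Y - l*(u*u+v*v) = u*((X-l)*u + Z*v) + v*(Z*u + (Y-l)*v)) by ring.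
    rewrite E1, E2 in Q.
    assert (Hc: u * gx a1 a2 a3 + v * gy a1 a2 a3 - c = 0) by (unfold c; ring).
    rewrite Hc in F1.
    assert (S: (nrm2 e1 + nrm2 e2 + nrm2 e3) * (u*u+v*v) = l * (u*u+v*v)) by (rewrite F1; lra).
    apply Rmult_eq_reg_r in S; [|lra]. rewrite S. ring.
Qed.

Lemma eqcase d K K' : C_B K' = 0 -> FFK d K K' <= alpha d * LK K ->
  exists n c, is_regression_line (k1 K) (k2 K) (k3 K) n c /\
    k1 K' = pedal n c (k1 K) /\ k2 K' = pedal n c (k2 K) /\ k3 K' = pedal n c (k3 K).
Proof.
  intros H Hle. pose proof (base_lower K K' H) as Hb.
  assert (HS: nrm2 (dv K K' 1) + nrm2 (dv K K' 2) + nrm2 (dv K K' 3) <= LK K).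
  { unfold FFK in Hle. rewrite FF_decomp in Hle.
    pose proof (alpha_pos d). pose proof (beta_nonneg d).
    match type of Hle with context [beta d * nrm2 ?p] => pose proof (nrm2_nonneg p) end.
    match type of Hle with context [FF d zero zero zero ?a ?b ?c] => pose proof (FF_nonneg d zero zero zero a b c) end.
    assert (0 <= beta d * nrm2 (padd (dv K K' 1) (padd (dv K K' 2) (dv K K' 3))))
      by (apply Rmult_le_pos; lra).
    apply Rmult_le_reg_l with (alpha d); lra. }
  destruct (line_through K' H) as [n [c [Hn [H1 [H2 H3]]]]].
  pose proof (reg_lower (k1 K) (k2 K) (k3 K) n c Hn).
  pose proof (pt_dist (k1 K) (k1 K') n c H1 Hn).
  pose proof (pt_dist (k2 K) (k2 K') n c H2 Hn).
  pose proof (pt_dist (k3 K) (k3 K') n c H3 Hn).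
  change (dv K K' 1) with (psub (k1 K) (k1 K')) in *.
  change (dv K K' 2) with (psub (k2 K) (k2 K')) in *.
  change (dv K K' 3) with (psub (k3 K) (k3 K')) in *.
  unfold LK in *.
  exists n, c. split; [split; [exact Hn|]|].
  - intros n' c' Hn'. pose proof (reg_lower (k1 K) (k2 K) (k3 K) n' c' Hn'). lra.
  - split; [apply pt_eq; auto; lra|]. split; apply pt_eq; auto; lra.
Qed.

Theorem theorem2 :
  forall (d : dist_kind) (b1 b2 b3 p4 p5 p6 : point),
    (forall (cs sn : R) (t : point) (K' : config),
       cs ^ 2 + sn ^ 2 = 1 ->
       is_closest d (rpr_config b1 b2 b3 p4 p5 p6 cs sn t) K' ->
       exists (n : point) (c : R),
         is_regression_line b1 b2 b3 n c /\
         k1 K' = pedal n c b1 /\ k2 K' = pedal n c b2 /\ k3 K' = pedal n c b3)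
    /\
    (forall (cs sn : R) (t : point),
       cs ^ 2 + sn ^ 2 = 1 ->
       exists K', is_closest d (rpr_config b1 b2 b3 p4 p5 p6 cs sn t) K')
    /\
    (forall (cs sn cs' sn' : R) (t t' : point) (K' K'' : config),
       cs ^ 2 + sn ^ 2 = 1 -> cs' ^ 2 + sn' ^ 2 = 1 ->
       is_closest d (rpr_config b1 b2 b3 p4 p5 p6 cs sn t) K' ->
       is_closest d (rpr_config b1 b2 b3 p4 p5 p6 cs' sn' t') K'' ->
       Dist d (rpr_config b1 b2 b3 p4 p5 p6 cs sn t) K'
       = Dist d (rpr_config b1 b2 b3 p4 p5 p6 cs' sn' t') K'').
Proof.
  intros d b1 b2 b3 p4 p5 p6.
  assert (Closest_val: forall K K', is_closest d K K' -> FFK d K K' = alpha d * LK K).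
  { intros K K' [HC Hmin]. destruct (attain d K) as [K0 [HC0 HF0]].
    pose proof (Hmin K0 HC0) as Hle. rewrite !Dist_FF in Hle. fold (FFK d K K') (FFK d K K0) in Hle.
    pose proof (FF_lower d K K' HC).
    assert (0 <= FFK d K K0) by apply FF_nonneg.
    apply sqrt_le_0 in Hle; [|apply FF_nonneg|assumption]. lra. }
  assert (Exists: forall K, exists K', is_closest d K K').
  { intro K. destruct (attain d K) as [K0 [HC0 HF0]]. exists K0. split; [exact HC0|].
    intros K'' HC''. rewrite !Dist_FF. fold (FFK d K K0) (FFK d K K'').
    apply sqrt_le_1_alt. rewrite HF0. apply FF_lower; exact HC''. }
  split; [|split].
  - intros cs sn t K' _ Hc.
    pose proof (Closest_val _ _ Hc) as HV.
    destruct Hc as [HC _].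
    apply (eqcase d (rpr_config b1 b2 b3 p4 p5 p6 cs sn t) K' HC). lra.
  - intros; apply Exists.
  - intros cs sn cs' sn' t t' K' K'' _ _ H1 H2.
    rewrite !Dist_FF. fold (FFK d (rpr_config b1 b2 b3 p4 p5 p6 cs sn t) K')
      (FFK d (rpr_config b1 b2 b3 p4 p5 p6 cs' sn' t') K'').
    rewrite (Closest_val _ _ H1), (Closest_val _ _ H2). reflexivity.
Qed.
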